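(* Let $G=(U\cup W,E)$ be a connected bipartite graph with bipartition $U,W$ and $|U|<|W|$. Then the following are equivalent: (i) $G$ is an edge-stable equimatchable graph; (ii) every vertex of $U$ is square-strong; (iii) for every $u\in U$ there exists a nonempty set $S\subseteq N(u)$ such that $|N(S)|\le |S|-1$.
   Context: All graphs are finite and simple. A graph is equimatchable if all its maximal matchings have the same cardinality; an equimatchable graph $G$ is edge-stable if $G\setminus e$ (delete edge $e$, keep vertices) is equimatchable for every $e\in E(G)$. A vertex $v$ of a graph $G$ is strong if every maximal matching of $G$ saturates $v$ (i.e. $v$ is an endpoint of an edge of the matching). A strong vertex $v$ is square-strong if for every $u\in N(v)$, $v$ is strong in $G-u$. $N(u)$ is the neighborhood of $u$, and for a set $S$, $N(S)$ is the union of the neighborhoods of vertices of $S$. *)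

(* Defs.v *)
(* A finite simple graph on a finType T is given by a
   symmetric irreflexive relation e; its edge set is a set of 2-subsets. *)
From mathcomp Require Import all_boot.
Set Implicit Arguments. Unset Strict Implicit. Unset Printing Implicit Defensive.

Definition edges (T : finType) (e : rel T) : {set {set T}} :=
  [set [set p.1; p.2] | p in [set p : T * T | e p.1 p.2]].

Definition is_matching (T : finType) (E M : {set {set T}}) : Prop :=
  M \subset E /\ trivIset M.

Definition maximal_matching (T : finType) (E M : {set {set T}}) : Prop :=
  is_matching E M /\
  forall M', is_matching E M' -> M \subset M' -> M' = M.

Definition equimatchable (T : finType) (E : {set {set T}}) : Prop :=
  forall M1 M2, maximal_matching E M1 -> maximal_matching E M2 -> #|M1| = #|M2|.

Definition del_edge (T : finType) (E : {set {set T}}) (f : {set T}) := E :\ f.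

Definition del_vertex (T : finType) (E : {set {set T}}) (u : T) :=
  [set f in E | u \notin f].

Definition edge_stable (T : finType) (E : {set {set T}}) : Prop :=
  equimatchable E /\ forall f, f \in E -> equimatchable (del_edge E f).

Definition saturates (T : finType) (M : {set {set T}}) (v : T) := v \in cover M.

Definition strong (T : finType) (E : {set {set T}}) (v : T) : Prop :=
  forall M, maximal_matching E M -> saturates M v.

Definition nbhd (T : finType) (E : {set {set T}}) (v : T) : {set T} :=
  [set w | [set v; w] \in E].

Definition nbhd_set (T : finType) (E : {set {set T}}) (S : {set T}) : {set T} :=
  \bigcup_(s in S) nbhd E s.

Definition square_strong (T : finType) (E : {set {set T}}) (v : T) : Prop :=
  strong E v /\ forall u, u \in nbhd E v -> strong (del_vertex E u) v.

Definition connected_graph (T : finType) (e : rel T) : Prop :=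
  forall x y, connect e x y.

Definition bipartition (T : finType) (e : rel T) (U W : {set T}) : Prop :=
  U :&: W = set0 /\ U :|: W = setT /\
  forall x y, e x y -> (x \in U /\ y \in W) \/ (x \in W /\ y \in U).

(* Main.v *)
Require Import Defs.
From mathcomp Require Import all_boot zify.
From Stdlib Require Import Classical.
Set Implicit Arguments. Unset Strict Implicit. Unset Printing Implicit Defensive.

Section Basics.
Variable T : finType.

Lemma triv_eq (M : {set {set T}}) B1 B2 x :
  trivIset M -> B1 \in M -> B2 \in M -> x \in B1 -> x \in B2 -> B1 = B2.
Proof. by move=> tM h1 h2 x1 x2; rewrite -(def_pblock tM h1 x1) (def_pblock tM h2 x2). Qed.

Lemma triv_intro (M : {set {set T}}) :
  (forall B1 B2 x, B1 \in M -> B2 \in M -> x \in B1 -> x \in B2 -> B1 = B2) ->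
  trivIset M.
Proof.
move=> H; apply/trivIsetP=> A B hA hB nAB; apply/pred0P=> x /=; apply/negbTE/negP=> /andP[xA xB].
by move/eqP: nAB; apply; apply: (H A B x).
Qed.

Lemma coverP (M : {set {set T}}) x : reflect (exists2 B, B \in M & x \in B) (x \in cover M).
Proof. apply: (iffP bigcupP) => [[B h1 h2]|[B h1 h2]]; by exists B. Qed.

Lemma in_set2_cases (p q x : T) : x \in [set p; q] -> x = p \/ x = q.
Proof. by move/set2P. Qed.

End Basics.

Section Graph.
Variables (T : finType) (e : rel T).
Hypothesis esym : symmetric e.
Hypothesis eirr : irreflexive e.

Lemma edgesP f : reflect (exists p q, e p q /\ f = [set p; q]) (f \in edges e).
Proof.
apply: (iffP imsetP) => [[[p q]]|[p [q [epq ->]]]].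
  by rewrite inE /= => epq ->; exists p, q.
by exists (p, q); rewrite // inE.
Qed.

Lemma edge_neq p q : e p q -> p != q.
Proof. by apply: contraTneq => ->; rewrite eirr. Qed.

Lemma set2_eq (p q p' q' : T) : p != q -> [set p; q] = [set p'; q'] ->
  (p = p' /\ q = q') \/ (p = q' /\ q = p').
Proof.
move=> npq E.
have hp : p \in [set p'; q'] by rewrite -E set21.
have hq : q \in [set p'; q'] by rewrite -E set22.
have hp' : p' \in [set p; q] by rewrite E set21.
have hq' : q' \in [set p; q] by rewrite E set22.
move: npq; case/set2P: hp => ->; case/set2P: hq => ->; rewrite ?eqxx // => _; by [left|right].
Qed.

Lemma edges2 p q : ([set p; q] \in edges e) = e p q.
Proof.
apply/edgesP/idP => [[p' [q' [epq E]]]|epq]; last by exists p, q.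
have npq : p' != q' by apply: edge_neq.
symmetry in E; case: (set2_eq npq E) => [[<- <-]|[<- <-]] //.
by rewrite esym.
Qed.

End Graph.

Section Match.
Variables (T : finType) (e : rel T).
Hypothesis esym : symmetric e.
Hypothesis eirr : irreflexive e.
Local Notation E := (edges e).

Lemma mem_edgeM (E' M : {set {set T}}) B : E' \subset E -> is_matching E' M -> B \in M ->
  exists p q, e p q /\ B = [set p; q].
Proof.
move=> sE [sM _] hB; apply/edgesP.
by apply: (subsetP sE); apply: (subsetP sM).
Qed.

Lemma cover_partner (E' M : {set {set T}}) x : E' \subset E -> is_matching E' M ->
  x \in cover M -> exists y, [set x; y] \in M /\ e x y.
Proof.
move=> sE hM /coverP [B hB xB].
have [p [q [epq EB]]] := mem_edgeM sE hM hB.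
move: xB; rewrite EB => /set2P [->|->].
  by exists q; rewrite -EB.
by exists p; rewrite setUC -EB esym.
Qed.

Lemma partner_uniq (E' M : {set {set T}}) x y y' : E' \subset E -> is_matching E' M ->
  [set x; y] \in M -> [set x; y'] \in M -> y = y'.
Proof.
move=> sE hM h1 h2.
have eq12 : [set x; y] = [set x; y'].
  by apply: (triv_eq (x := x) hM.2 h1 h2); rewrite set21.
have [p [q [epq EB]]] := mem_edgeM sE hM h1.
have nxy : x != y.
  have : #|[set x; y]| = 2 by rewrite EB cards2 (edge_neq eirr epq).
  by rewrite cards2; case: (x != y).
case: (set2_eq nxy eq12) => [[_ ->]|[xy' yx]] //.
by move: nxy; rewrite yx eqxx.
Qed.

Lemma max_char (E' M : {set {set T}}) : E' \subset E ->
  maximal_matching E' M <->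
  is_matching E' M /\ (forall p q, [set p; q] \in E' -> p \in cover M \/ q \in cover M).
Proof.
move=> sE; split.
  move=> [hM hmax]; split => // p q hpq.
  apply: NNPP => /not_or_and [np nq].
  have hM' : is_matching E' ([set p; q] |: M).
    split; first by rewrite subUset sub1set hpq hM.1.
    apply: triv_intro => B1 B2 x.
    have cov : forall B, B \in M -> x \in B -> x \in [set p; q] -> False.
      move=> B hB xB /set2P [] ex; [apply: np|apply: nq]; apply/coverP; exists B => //;
      by rewrite -ex.
    case/setU1P => [->|h1]; case/setU1P => [->|h2] //.
    - by move=> x1 x2; case: (cov _ h2 x2 x1).
    - by move=> x1 x2; case: (cov _ h1 x1 x2).
    - by apply: triv_eq hM.2 h1 h2.
  have := hmax _ hM' (subsetUr _ _) => eqM.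
  by apply: np; apply/coverP; exists [set p; q]; rewrite ?set21 // -eqM setU11.
move=> [hM hc]; split => // M' hM' sMM'.
apply/eqP; rewrite eqEsubset sMM' andbT; apply/subsetP => g hg.
have [p [q [epq Eg]]] := mem_edgeM sE hM' hg.
have : [set p; q] \in E' by rewrite -Eg (subsetP hM'.1).
move/hc => hpq.
have [x [B hB xB] xg] : exists2 x, (exists2 B, B \in M & x \in B) & x \in g.
  case: hpq => /coverP h; [exists p|exists q] => //; rewrite Eg ?set21 ?set22 //.
by rewrite (triv_eq hM'.2 hg (subsetP sMM' _ hB) xg xB).
Qed.

Lemma extend_max (E' M : {set {set T}}) : is_matching E' M ->
  exists M', maximal_matching E' M' /\ M \subset M'.
Proof.
suff : forall n (M0 : {set {set T}}), #|E'| - #|M0| <= n -> is_matching E' M0 ->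
  exists M', maximal_matching E' M' /\ M0 \subset M' by apply.
elim => [|n IH] M0 hn hM0.
  case: (classic (maximal_matching E' M0)) => [hmax|nmax]; first by exists M0.
  exfalso; apply: nmax; split => // M' hM' sub.
  apply/eqP; rewrite eq_sym eqEcard sub /=.
  move: hn; rewrite leqn0 subn_eq0 => hn; exact: leq_trans (subset_leq_card hM'.1) hn.
case: (classic (maximal_matching E' M0)) => [hmax|nmax]; first by exists M0.
have [M' [hM' [sub neq]]] : exists M', is_matching E' M' /\ M0 \subset M' /\ M' <> M0.
  apply: NNPP => hne; apply: nmax; split => // M' hM' sub.
  by apply: NNPP => neq; apply: hne; exists M'.
have lt : #|M0| < #|M'|.
  by apply: proper_card; rewrite properEneq sub andbT; apply/eqP => h; apply: neq.
have [M'' [h1 h2]] := IH M' ltac:(have := subset_leq_card hM'.1; lia) hM'.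
by exists M''; split => //; apply: subset_trans h2.
Qed.

Lemma card_side (E' M : {set {set T}}) (X : {set T}) : E' \subset E -> is_matching E' M ->
  (forall p q, e p q -> (p \in X) != (q \in X)) ->
  #|cover M :&: X| = #|M|.
Proof.
move=> sE hM hX.
have inj : {in cover M :&: X &, injective (pblock M)}.
  move=> x y /setIP [cx xX] /setIP [cy yX] eqp.
  have hB := pblock_mem cx.
  have xB : x \in pblock M x by rewrite mem_pblock.
  have yB : y \in pblock M x by rewrite eqp mem_pblock.
  have [p [q [epq EB]]] := mem_edgeM sE hM hB.
  have h := hX _ _ epq.
  move: xB yB; rewrite EB => /set2P [] ? /set2P [] ?; subst => //.
    by move: h; rewrite xX yX.
  by move: h; rewrite xX yX.
rewrite -(card_in_imset inj); apply: eq_card => B.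
apply/imsetP/idP => [[x /setIP [cx _] ->]|hB]; first exact: pblock_mem.
have [p [q [epq EB]]] := mem_edgeM sE hM hB.
have hpq := hX _ _ epq.
have [z [zB zX]] : exists z, z \in B /\ z \in X.
  case pX: (p \in X); first by exists p; rewrite EB set21.
  by exists q; rewrite EB set22; move: hpq; rewrite pX; case: (q \in X).
exists z; last by rewrite (def_pblock hM.2 hB zB).
by rewrite inE zX andbT; apply/coverP; exists B.
Qed.

End Match.

Section Hall.
Variable T : finType.

Definition NSet (Nb : T -> {set T}) (S : {set T}) := \bigcup_(s in S) Nb s.

Lemma NSetD (Nb : T -> {set T}) (X Y : {set T}) : NSet (fun s => Nb s :\: Y) X = NSet Nb X :\: Y.
Proof.
apply/setP => z; rewrite inE; apply/bigcupP/andP => [[s sX]|[zY /bigcupP [s sX zN]]].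
  by rewrite inE => /andP [zY zN]; split => //; apply/bigcupP; exists s.
by exists s => //; rewrite inE zY.
Qed.

Lemma NSetU (Nb : T -> {set T}) (X Y : {set T}) : NSet Nb (X :|: Y) = NSet Nb X :|: NSet Nb Y.
Proof. by rewrite /NSet bigcup_setU. Qed.

Lemma NSetS (Nb : T -> {set T}) (X Y : {set T}) : X \subset Y -> NSet Nb X \subset NSet Nb Y.
Proof.
move/subsetP=> sXY; apply/subsetP => z /bigcupP [s sX zN].
by apply/bigcupP; exists s => //; apply: sXY.
Qed.

Lemma NSet1 (Nb : T -> {set T}) x : NSet Nb [set x] = Nb x.
Proof. by rewrite /NSet big_set1. Qed.

Lemma NSet_sub (Nb : T -> {set T}) (X : {set T}) x : x \in X -> Nb x \subset NSet Nb X.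
Proof. by move=> xX; rewrite -NSet1; apply: NSetS; rewrite sub1set. Qed.

Theorem hall (Nb : T -> {set T}) (A : {set T}) :
  (forall S : {set T}, S \subset A -> #|S| <= #|NSet Nb S|) ->
  exists f : T -> T, {in A &, injective f} /\ {in A, forall a, f a \in Nb a}.
Proof.
suff : forall n Nb (A : {set T}), #|A| <= n ->
  (forall S : {set T}, S \subset A -> #|S| <= #|NSet Nb S|) ->
  exists f : T -> T, {in A &, injective f} /\ {in A, forall a, f a \in Nb a}.
  by move=> H; apply: (H #|A|).
elim => [|n IH] {}Nb {}A hA hH.
  move: hA; rewrite leqn0 cards_eq0 => /eqP ->.
  by exists id; split => x; rewrite inE.
case: (set_0Vmem A) => [->|[a0 a0A]].
  by exists id; split => x; rewrite inE.
case: (boolP [exists S : {set T}, [&& S != set0, S \proper A & #|NSet Nb S| <= #|S|]]).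
  case/existsP => S /and3P [S0 pSA tS].
  have sSA := proper_sub pSA.
  have ltS := proper_card pSA.
  have [f1 [inj1 mem1]] : exists f : T -> T, {in S &, injective f} /\ {in S, forall a, f a \in Nb a}.
    apply: IH; first by lia.
    by move=> X sX; apply: hH; apply: subset_trans sSA.
  set NS := NSet Nb S.
  have [f2 [inj2 mem2]] : exists f : T -> T, {in A :\: S &, injective f} /\
      {in A :\: S, forall a, f a \in Nb a :\: NS}.
    apply: IH.
      have : #|A :\: S| < #|A|.
        rewrite cardsD (setIidPr sSA).
        have : 0 < #|S| by rewrite card_gt0.
        lia.
      lia.
    move=> X sX.
    rewrite NSetD.
    have dXS : X :&: S = set0.
      apply/setP => z; rewrite !inE; apply/negbTE/negP => /andP [zX zS].
      by move: (subsetP sX z zX); rewrite inE zS.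
    have := hH (X :|: S); rewrite subUset sSA (subset_trans sX (subsetDl _ _)) => /(_ isT).
    rewrite NSetU.
    have := cardsUI X S; rewrite dXS cards0.
    have := cardsUI (NSet Nb X) NS.
    have := cardsD (NSet Nb X) NS.
    have := subset_leq_card (subsetIr (NSet Nb X) NS).
    move: tS; rewrite -/NS.
    lia.
  exists (fun x => if x \in S then f1 x else f2 x); split.
    move=> x y xA yA /=.
    case xS: (x \in S); case yS: (y \in S).
    - exact: inj1.
    - move=> h; have := mem2 y; rewrite inE yS yA => /(_ isT).
      rewrite -h inE => /andP [/negP []].
      by apply: (subsetP (NSet_sub Nb xS)); apply: mem1.
    - move=> h; have := mem2 x; rewrite inE xS xA => /(_ isT).
      rewrite h inE => /andP [/negP []].
      by apply: (subsetP (NSet_sub Nb yS)); apply: mem1.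
    - by apply: inj2; rewrite inE ?xS ?yS ?xA ?yA.
  move=> x xA /=; case xS: (x \in S); first exact: mem1.
  by have := mem2 x; rewrite inE xS xA => /(_ isT); rewrite inE => /andP [].
move=> nt.
have : 1 <= #|Nb a0|.
  by have := hH [set a0]; rewrite sub1set a0A NSet1 cards1 => /(_ isT).
move/card_gt0P => [b bN].
have [f' [inj' mem']] : exists f : T -> T, {in A :\ a0 &, injective f} /\
    {in A :\ a0, forall a, f a \in Nb a :\ b}.
  apply: IH.
    by have := cardsD1 a0 A; rewrite a0A; lia.
  move=> X sX; rewrite NSetD.
  case: (set_0Vmem X) => [->|[x xX]]; first by rewrite cards0.
  have pXA : X \proper A.
    rewrite properE (subset_trans sX (subsetDl _ _)) /=.
    apply/negP => /subsetP /(_ a0 a0A) /(subsetP sX); by rewrite !inE eqxx.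
  have : ~~ (#|NSet Nb X| <= #|X|).
    apply/negP => h; move/existsP: nt; apply; exists X; rewrite h pXA /= ?andbT.
    by apply/set0Pn; exists x.
  have := cardsD1 b (NSet Nb X).
  case: (b \in NSet Nb X) => /=; lia.
exists (fun x => if x == a0 then b else f' x); split.
  move=> x y xA yA /=.
  case: (eqVneq x a0) => [->|xa]; case: (eqVneq y a0) => [->|ya] //.
  - move=> h; have := mem' y; rewrite !inE ya yA => /(_ isT).
    by rewrite -h eqxx.
  - move=> h; have := mem' x; rewrite !inE xa xA => /(_ isT).
    by rewrite h eqxx.
  - by apply: inj'; rewrite !inE ?xa ?ya ?xA ?yA.
move=> x xA /=; case: (eqVneq x a0) => [->//|xa].
by have := mem' x; rewrite !inE xa xA => /(_ isT) /andP [].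
Qed.

End Hall.

Section Bip.
Variables (T : finType) (e : rel T) (U W : {set T}).
Hypothesis esym : symmetric e.
Hypothesis eirr : irreflexive e.
Hypothesis hbip : bipartition e U W.
Local Notation E := (edges e).

Lemma inUW x : x \in U \/ x \in W.
Proof.
have : x \in U :|: W by rewrite hbip.2.1 inE.
by case/setUP; [left|right].
Qed.

Lemma UWF x : x \in U -> x \in W -> False.
Proof. move=> xU xW; have : x \in U :&: W by rewrite inE xU xW.
by rewrite hbip.1 inE. Qed.

Lemma eU p q : e p q -> p \in U -> q \in W.
Proof. by move/(hbip.2.2) => [[]|[pW _] pU] //; case: (UWF pU pW). Qed.

Lemma eW p q : e p q -> p \in W -> q \in U.
Proof. by move/(hbip.2.2) => [[pU _] pW|[]] //; case: (UWF pU pW). Qed.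

Lemma sideU p q : e p q -> (p \in U) != (q \in U).
Proof.
move=> epq; case pU: (p \in U).
  by have := eU epq pU; case qU: (q \in U) => // qW; case: (UWF qU qW).
case: (inUW p) => [|pW]; first by rewrite pU.
by rewrite (eW epq pW).
Qed.

Lemma sideW p q : e p q -> (p \in W) != (q \in W).
Proof.
move=> epq; case pW: (p \in W).
  by have := eW epq pW; case qW: (q \in W) => // qU; case: (UWF qU qW).
case: (inUW p) => [pU|]; last by rewrite pW.
by rewrite (eU epq pU).
Qed.

Lemma mem_nbhd (E' : {set {set T}}) v w : (w \in nbhd E' v) = ([set v; w] \in E').
Proof. by rewrite /nbhd inE. Qed.

Lemma del_vertex_sub w : del_vertex E w \subset E.
Proof. by apply/subsetP => f; rewrite inE => /andP []. Qed.

Lemma del_edge_sub f : del_edge E f \subset E.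
Proof. exact: subsetDl. Qed.

Definition partner (M : {set {set T}}) x := odflt x [pick y | [set x; y] \in M].

Lemma partnerP (E' M : {set {set T}}) x : E' \subset E -> is_matching E' M ->
  x \in cover M -> [set x; partner M x] \in M.
Proof.
move=> sE hM cx; rewrite /partner; case: pickP => [y //|none].
have [y [hy _]] := cover_partner esym sE hM cx.
by have := none y; rewrite hy.
Qed.

Lemma strong_iff (E' : {set {set T}}) u : E' \subset E -> u \in U ->
  strong E' u <->
  exists S : {set T}, [/\ S != set0, S \subset nbhd E' u & #|nbhd_set E' S| <= #|S|].
Proof.
move=> sE uU.
have nbW : forall s, s \in nbhd E' u -> s \in W.
  move=> s; rewrite mem_nbhd => /(subsetP sE); rewrite edges2 // => eus.
  exact: eU eus uU.
have nbU : forall s t, s \in W -> t \in nbhd E' s -> t \in U.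
  move=> s t sW; rewrite mem_nbhd => /(subsetP sE); rewrite edges2 // => est.
  exact: eW est sW.
have uN : forall S : {set T}, S != set0 -> S \subset nbhd E' u -> u \in nbhd_set E' S.
  move=> S /set0Pn [s sS] sSN; apply/bigcupP; exists s => //.
  by rewrite mem_nbhd setUC -mem_nbhd (subsetP sSN).
split; last first.
  move=> [S [S0 sSN tS]] M hmax; apply: NNPP => nu.
  have [hM hc] := (max_char M sE).1 hmax.
  have cS : forall s, s \in S -> s \in cover M.
    move=> s sS; case: (hc u s) => //; by rewrite -mem_nbhd (subsetP sSN).
  pose p := partner M.
  have pM : forall s, s \in S -> [set s; p s] \in M.
    by move=> s sS; apply: (partnerP sE hM (cS s sS)).
  have inj : {in S &, injective p}.
    move=> s s' sS s'S eqp.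
    have h1 := pM s sS; have h2 := pM s' s'S.
    rewrite setUC in h1; rewrite setUC -eqp in h2.
    exact: (partner_uniq eirr sE hM h1 h2).
  have sub : p @: S \subset nbhd_set E' S :\ u.
    apply/subsetP => t /imsetP [s sS ->]; rewrite !inE; apply/andP; split.
      apply/eqP => psu; apply: nu; apply/coverP; exists [set s; p s]; first exact: pM.
      by rewrite psu set22.
    apply/bigcupP; exists s => //; rewrite mem_nbhd.
    exact: (subsetP hM.1 _ (pM s sS)).
  have := subset_leq_card sub; rewrite (card_in_imset inj).
  have := cardsD1 u (nbhd_set E' S); rewrite uN //.
  have : 0 < #|S| by rewrite card_gt0.
  lia.
move=> hs; apply: NNPP => nS.
pose Nb s := nbhd E' s :\ u.
have [f [inj fN]] : exists f : T -> T, {in nbhd E' u &, injective f} /\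
    {in nbhd E' u, forall a, f a \in Nb a}.
  apply: hall => S sS.
  case: (set_0Vmem S) => [->|[s sS']]; first by rewrite cards0.
  have S0 : S != set0 by apply/set0Pn; exists s.
  have : ~~ (#|nbhd_set E' S| <= #|S|).
    by apply/negP => h; apply: nS; exists S; split.
  have -> : NSet Nb S = nbhd_set E' S :\ u.
    by rewrite /Nb NSetD.
  have := cardsD1 u (nbhd_set E' S); rewrite uN //.
  lia.
pose M0 := [set [set a; f a] | a in nbhd E' u].
have fU : forall a, a \in nbhd E' u -> f a \in U.
  move=> a aN; apply: (nbU a); first exact: nbW.
  by have := fN a aN; rewrite inE => /andP [].
have hM0 : is_matching E' M0.
  split.
    apply/subsetP => B /imsetP [a aN ->].
    by have := fN a aN; rewrite inE mem_nbhd => /andP [].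
  apply: triv_intro => B1 B2 x /imsetP [a aN ->] /imsetP [a' aN' ->].
  move=> /set2P [] h1 /set2P [] h2.
  - by rewrite -h1 h2.
  - by case: (UWF (fU a' aN')); rewrite -h2 h1; apply: nbW.
  - by case: (UWF (fU a aN)); rewrite -h1 h2; apply: nbW.
  - have eqa : a = a' by apply: inj => //; rewrite -h1 -h2.
    by rewrite eqa.
have [M [hmax sub]] := extend_max hM0.
have [v [huv euv]] := cover_partner esym sE hmax.1 (hs M hmax).
have vN : v \in nbhd E' u by rewrite mem_nbhd (subsetP hmax.1.1 _ huv).
have hB : [set v; f v] \in M by apply: (subsetP sub); apply/imsetP; exists v.
have eqB := triv_eq (x := v) hmax.1.2 huv hB (set22 _ _) (set21 _ _).
have : u \in [set v; f v] by rewrite -eqB set21.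
case/set2P => [uv|ufv].
  by move: euv; rewrite uv eirr.
by have := fN v vN; rewrite -ufv !inE eqxx.
Qed.

Lemma nbhdU_W u : u \in U -> nbhd E u \subset W.
Proof. by move=> uU; apply/subsetP => s; rewrite mem_nbhd edges2 // => eus; apply: eU eus uU. Qed.

Lemma nbhd_del_W w s : w \in W -> s \in W -> s != w -> nbhd (del_vertex E w) s = nbhd E s.
Proof.
move=> wW sW sw; apply/setP => t; rewrite !mem_nbhd inE.
case h: ([set s; t] \in E); rewrite ?andbF ?andbT //.
move: h; rewrite edges2 // => est.
have tU := eW est sW.
rewrite !inE negb_or eq_sym sw /=; apply/eqP => wt.
by apply: (UWF tU); rewrite -wt.
Qed.

Lemma nbhd_del_U w u : u \in U -> w \in W -> nbhd (del_vertex E w) u = nbhd E u :\ w.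
Proof.
move=> uU wW; apply/setP => t; rewrite !inE negb_or.
have -> : (w != u) by apply/eqP => wu; apply: (UWF uU); rewrite -wu.
by rewrite /= andbC eq_sym.
Qed.

Lemma nbhd_set_del w (S : {set T}) : w \in W -> S \subset W :\ w ->
  nbhd_set (del_vertex E w) S = nbhd_set E S.
Proof.
move=> wW sS; apply: eq_bigr => s sS'.
have := subsetP sS s sS'; rewrite !inE => /andP [sw sW].
exact: nbhd_del_W.
Qed.

Lemma arith1 (a b c d k f g : nat) : a + 0 = b + c -> d + k = f + g -> a <= d -> f <= b -> g <= c -> 1 <= k -> False.
Proof. lia. Qed.

Lemma arith2 (x a b c d k f g i : nat) : x <= k -> a + i = b + c -> d + k = f + g -> a <= d -> f <= b -> g <= c -> x <= i.
Proof. lia. Qed.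

Lemma sq_iff u : u \in U ->
  square_strong E u <->
  exists S : {set T}, [/\ S != set0, S \subset nbhd E u & #|nbhd_set E S| <= #|S| - 1].
Proof.
move=> uU.
have sEE : E \subset E := subxx _.
have uN : forall S : {set T}, S != set0 -> S \subset nbhd E u -> u \in nbhd_set E S.
  move=> S /set0Pn [s sS] sSN; apply/bigcupP; exists s => //.
  by rewrite mem_nbhd setUC -mem_nbhd (subsetP sSN).
have NW := nbhdU_W uU.
split; last first.
  move=> [S [S0 sSN tS]].
  have c1 : 1 <= #|nbhd_set E S|.
    by rewrite card_gt0; apply/set0Pn; exists u; apply: uN.
  split.
    apply/(strong_iff sEE uU); exists S; split => //; lia.
  move=> w wN.
  have wW := subsetP NW w wN.
  apply/(strong_iff (del_vertex_sub w) uU).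
  exists (S :\ w).
  have sub : S :\ w \subset W :\ w.
    by apply/subsetP => s; rewrite !in_setD1 => /andP [-> /(subsetP sSN) /(subsetP NW)].
  rewrite (nbhd_set_del wW sub) nbhd_del_U //.
  split.
  - rewrite -card_gt0; have := cardsD1 w S; case: (w \in S) => /=; lia.
  - by apply: setSD.
  - have := subset_leq_card (NSetS (nbhd E) (subsetDl S [set w])).
    rewrite /NSet -/(nbhd_set E S) -/(nbhd_set E (S :\ w)).
    have := cardsD1 w S; case: (w \in S) => /=; lia.
move=> [hs hsw]; apply: NNPP => nS.
have nS' : forall S : {set T}, S != set0 -> S \subset nbhd E u -> #|S| <= #|nbhd_set E S|.
  move=> S S0 sS; rewrite leqNgt; apply/negP => h; apply: nS; exists S; split => //; lia.
have [S0 [S00 sS0 tS0]] := (strong_iff sEE uU).1 hs.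
suff : forall n (S : {set T}), #|S| <= n -> S != set0 -> S \subset nbhd E u ->
  #|nbhd_set E S| <= #|S| -> False by move/(_ _ S0 (leqnn _)); apply.
elim => [|n IH] S hn S0' sS tS.
  by move: hn; rewrite leqn0 cards_eq0 (negbTE S0').
have [x xS] := set0Pn _ S0'.
have xN := subsetP sS x xS.
have xW := subsetP NW x xN.
have [S' [S'0 sS' tS']] := (strong_iff (del_vertex_sub x) uU).1 (hsw x xN).
rewrite nbhd_del_U // in sS'.
have sS'W : S' \subset W :\ x.
  by apply/subsetP => s /(subsetP sS'); rewrite !in_setD1 => /andP [-> /(subsetP NW)].
rewrite (nbhd_set_del xW sS'W) in tS'.
have sS'N : S' \subset nbhd E u := subset_trans sS' (subsetDl _ _).
have xS' : x \notin S' by apply/negP => /(subsetP sS'); rewrite !inE eqxx.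
have SU0 : S :|: S' != set0.
  by apply/set0Pn; exists x; rewrite inE xS.
have hU0 := nS' (S :|: S') SU0 ltac:(by rewrite subUset sS sS'N).
have hU : #|S :|: S'| <= #|nbhd_set E S :|: nbhd_set E S'|.
  by move: hU0; rewrite /nbhd_set bigcup_setU.
have uNS := uN S S0' sS.
have uNS' := uN S' S'0 sS'N.
have cI : 1 <= #|nbhd_set E S :&: nbhd_set E S'|.
  by rewrite card_gt0; apply/set0Pn; exists u; rewrite inE uNS uNS'.
have c1 := cardsUI S S'.
have c2 := cardsUI (nbhd_set E S) (nbhd_set E S').
case: (set_0Vmem (S :&: S')) => [I0|[y yI]].
  rewrite I0 cards0 in c1.
  exact: (arith1 c1 c2 hU tS tS' cI).
have hI : #|nbhd_set E (S :&: S')| <= #|nbhd_set E S :&: nbhd_set E S'|.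
  apply: subset_leq_card; rewrite subsetI; apply/andP; split; apply: NSetS; [exact: subsetIl|exact: subsetIr].
have ltI : #|S :&: S'| < #|S|.
  apply: proper_card; rewrite properE subsetIl /=; apply/negP => /subsetP /(_ x xS).
  by rewrite inE (negbTE xS') andbF.
apply: (IH (S :&: S')).
- by rewrite -ltnS; exact: leq_trans ltI hn.
- by apply/set0Pn; exists y.
- exact: subset_trans (subsetIl _ _) sS.
- exact: (arith2 hI c1 c2 hU tS tS').
Qed.

End Bip.

Section Gen.
Variable T : finType.

Lemma coverU1P (A : {set T}) (P : {set {set T}}) z :
  reflect (z \in A \/ z \in cover P) (z \in cover (A |: P)).
Proof.
apply: (iffP (coverP _ _)) => [[B /setU1P [->|hB] zB]|[zA|/coverP [B hB zB]]].
- by left.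
- by right; apply/coverP; exists B.
- by exists A; rewrite ?setU11.
- by exists B; rewrite ?setU1r.
Qed.

Lemma add_edge (E' M : {set {set T}}) p q : is_matching E' M -> [set p; q] \in E' ->
  p \notin cover M -> q \notin cover M ->
  is_matching E' ([set p; q] |: M) /\ #|[set p; q] |: M| = #|M|.+1.
Proof.
move=> [sM tM] hE np nq.
have nin : [set p; q] \notin M.
  by apply/negP => h; move/negP: np; apply; apply/coverP; exists [set p; q]; rewrite ?set21.
split; last by rewrite cardsU1 nin.
split; first by rewrite subUset sub1set hE sM.
apply: triv_intro => B1 B2 x.
have cov : forall B, B \in M -> x \in B -> x \in [set p; q] -> False.
  move=> B hB xB /set2P [] ex; [move/negP: np|move/negP: nq]; apply; apply/coverP; exists B => //;
  by rewrite -ex.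
case/setU1P => [->|h1]; case/setU1P => [->|h2] //.
- by move=> x1 x2; case: (cov _ h2 x2 x1).
- by move=> x1 x2; case: (cov _ h1 x1 x2).
- by apply: triv_eq tM h1 h2.
Qed.

Lemma del_matching (E' M : {set {set T}}) B : is_matching E' M -> B \in M ->
  is_matching E' (M :\ B) /\ cover (M :\ B) = cover M :\: B /\ #|M :\ B| = #|M|.-1.
Proof.
move=> [sM tM] hB; split; first split.
- exact: subset_trans (subsetDl _ _) sM.
- exact: trivIsetD.
split; first exact: coverD1.
by rewrite (cardsD1 B M) hB.
Qed.

Lemma crossing (e : rel T) (P : T -> Prop) x y : P x -> ~ P y -> connect e x y ->
  exists p q, [/\ P p, ~ P q & e p q].
Proof.
move=> Px nPy /connectP [s ps ey]; subst y.
elim: s x Px ps nPy => [|z s IH] x Px /=; first by [].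
case/andP => exz ps nP.
case: (classic (P z)) => Pz; first exact: IH Pz ps nP.
by exists x, z.
Qed.

End Gen.

Section LPP.
Variables (T : finType) (e : rel T) (U W : {set T}).
Hypothesis esym : symmetric e.
Hypothesis eirr : irreflexive e.
Hypothesis hbip : bipartition e U W.
Local Notation E := (edges e).

Fixpoint Zs (M : {set {set T}}) n : {set T} :=
  match n with
  | 0 => [set x in U | x \notin cover M]
  | n'.+1 => Zs M n' :|: [set z | [exists y, [exists x,
                [&& x \in Zs M n', e x y & [set y; z] \in M]]]]
  end.

Lemma Zs_U M n : is_matching E M -> Zs M n \subset U.
Proof.
move=> hM; elim: n => [|n IH] /=.
  by apply/subsetP => x; rewrite inE => /andP [].
rewrite subUset IH /=; apply/subsetP => z; rewrite inE => /existsP [y /existsP [x]].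
case/and3P => xZ exy hyz.
have yW := eU hbip exy (subsetP IH x xZ).
have := subsetP hM.1 _ hyz; rewrite edges2 // => eyz.
exact: (eW hbip eyz yW).
Qed.

Lemma Zs_S M n : Zs M n \subset Zs M n.+1.
Proof. exact: subsetUl. Qed.

Lemma Zs_step M n x y z : x \in Zs M n -> e x y -> [set y; z] \in M -> z \in Zs M n.+1.
Proof.
move=> xZ exy hyz; rewrite /= inE; apply/orP; right; rewrite inE.
by apply/existsP; exists y; apply/existsP; exists x; rewrite xZ exy hyz.
Qed.

Lemma Zs_swap M M1 x0 : is_matching E M ->
  (forall z, z \in U -> z \in cover M1 -> z \in cover M) ->
  (forall y z, z \in U -> z != x0 -> [set y; z] \in M -> [set y; z] \in M1) ->
  forall j, x0 \notin Zs M j -> Zs M j \subset Zs M1 j.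
Proof.
move=> hM hc he; elim => [|j IH] /= nx.
  apply/subsetP => z; rewrite !inE => /andP [zU nz]; rewrite zU /=.
  by apply: contra nz; apply: hc.
have nx' : x0 \notin Zs M j by apply: contra nx; apply: (subsetP (Zs_S M j)).
apply/subsetP => z /setUP [zj|].
  by apply/setUP; left; apply: (subsetP (IH nx')).
rewrite inE => /existsP [y /existsP [x /and3P [xZ exy hyz]]].
have zZ : z \in Zs M j.+1 by apply: Zs_step xZ exy hyz.
have zU := subsetP (Zs_U j.+1 hM) z zZ.
have zx : z != x0 by apply/eqP => h; move: nx; rewrite -h zZ.
exact: Zs_step (subsetP (IH nx') x xZ) exy (he y z zU zx hyz).
Qed.

Lemma P1 k : (forall M', is_matching E M' -> #|M'| <= k) ->
  forall n M, is_matching E M -> #|M| = k ->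
  forall x y, x \in Zs M n -> e x y -> y \notin cover M -> False.
Proof.
move=> hk; elim => [|n IH] M hM hMk x y /=.
  rewrite inE => /andP [xU nx] exy ny.
  have [hM' c'] := add_edge hM (ltac:(rewrite edges2 //) : [set x; y] \in E) nx ny.
  by have := hk _ hM'; rewrite c' hMk ltnn.
case/setUP => [xZ|]; first exact: IH hM hMk x y xZ.
case: (boolP (x \in Zs M n)) => [xZ _|nxZ]; first exact: IH hM hMk x y xZ.
rewrite inE => /existsP [y1 /existsP [x1 /and3P [x1Z ex1y1 hB]]] exy ny.
have xZ1 : x \in Zs M n.+1 by apply: Zs_step x1Z ex1y1 hB.
have xU := subsetP (Zs_U n.+1 hM) x xZ1.
have x1U := subsetP (Zs_U n hM) x1 x1Z.
have y1W := eU hbip ex1y1 x1U.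
have yW := eU hbip exy xU.
have [hD [cD kD]] := del_matching hM hB.
have nxD : x \notin cover (M :\ [set y1; x]) by rewrite cD inE set22.
have nyD : y \notin cover (M :\ [set y1; x]).
  by rewrite cD inE negb_and negbK; apply/orP; right.
have [hM1 c1] := add_edge hD (ltac:(rewrite edges2 //) : [set x; y] \in E) nxD nyD.
set M1 := [set x; y] |: _ in hM1 c1.
have kM1 : #|M1| = k.
  rewrite c1 kD -hMk; have : 0 < #|M| by rewrite card_gt0; apply/set0Pn; exists [set y1; x].
  by case: #|M|.
have y1ny : y1 != y.
  apply/eqP => h; move/negP: ny; apply; rewrite -h; apply/coverP; exists [set y1; x] => //.
  by rewrite set21.
have ny1 : y1 \notin cover M1.
  apply/negP => /coverU1P [/set2P [h|h]|].
  - by apply: (UWF hbip xU); rewrite -h.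
  - by move/eqP: y1ny.
  - by rewrite cD inE set21.
apply: (IH M1 hM1 kM1 x1 y1) => //.
apply: (subsetP (Zs_swap hM _ _ nxZ)) => //.
  move=> z zU /coverU1P [/set2P [->|h]|].
  - by apply/coverP; exists [set y1; x]; rewrite ?set22.
  - by case: (UWF hbip zU); rewrite h.
  - by rewrite cD inE => /andP [].
move=> y' z zU zx hyz; apply/setU1P; right; rewrite !inE hyz andbT.
apply/eqP => h.
have : z \in [set y1; x] by rewrite -h set22.
case/set2P => h'; last by move/eqP: zx.
by apply: (UWF hbip zU); rewrite h'.
Qed.

End LPP.

Section Main.
Variables (T : finType) (e : rel T) (U W : {set T}).
Hypothesis esym : symmetric e.
Hypothesis eirr : irreflexive e.
Hypothesis hconn : connected_graph e.
Hypothesis hbip : bipartition e U W.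
Hypothesis hlt : #|U| < #|W|.
Local Notation E := (edges e).

Lemma card_U (E' M : {set {set T}}) : E' \subset E -> is_matching E' M ->
  #|cover M :&: U| = #|M|.
Proof. move=> sE hM; apply: (card_side sE hM) => p q; exact: (sideU hbip). Qed.

Lemma card_W (E' M : {set {set T}}) : E' \subset E -> is_matching E' M ->
  #|cover M :&: W| = #|M|.
Proof. move=> sE hM; apply: (card_side sE hM) => p q; exact: (sideW hbip). Qed.

Lemma sat_card (E' M : {set {set T}}) : E' \subset E -> is_matching E' M ->
  U \subset cover M -> #|M| = #|U|.
Proof. by move=> sE hM sU; rewrite -(card_U sE hM) (setIidPr sU). Qed.

Lemma unsat_card (E' M : {set {set T}}) u : E' \subset E -> is_matching E' M ->
  u \in U -> u \notin cover M -> #|M| < #|U|.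
Proof.
move=> sE hM uU nu; rewrite -(card_U sE hM).
apply: proper_card; rewrite properE subsetIr /=; apply/negP => /subsetP /(_ u uU).
by rewrite inE (negbTE nu).
Qed.

Lemma lpp : equimatchable E -> forall u, u \in U -> strong E u.
Proof.
move=> hEq u uU M hmax; apply: NNPP => nu.
have sEE : E \subset E := subxx _.
have hM := hmax.1.
set k := #|M|.
have bound : forall M', is_matching E M' -> #|M'| <= k.
  move=> M' hM'; have [M'' [h1 h2]] := extend_max hM'.
  by rewrite /k -(hEq _ _ h1 hmax); apply: subset_leq_card.
have [w [wW nw]] : exists w, w \in W /\ w \notin cover M.
  apply: NNPP => h.
  have sW : W \subset cover M :&: W.
    apply/subsetP => w wW; rewrite inE wW andbT; apply: NNPP => nw.
    by apply: h; exists w; split => //; apply/negP.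
  have h1 := subset_leq_card sW; rewrite (card_W sEE hM) in h1.
  have h2 := subset_leq_card (subsetIr (cover M) U); rewrite (card_U sEE hM) in h2.
  by move: hlt; rewrite ltnNge (leq_trans h1 h2).
pose inZ z := exists n, z \in Zs e U M n.
pose NZ q := exists p, inZ p /\ e p q.
have p1 : forall q, NZ q -> q \in cover M.
  move=> q [p [[n pZ] epq]]; apply: NNPP => nq.
  by apply: (@P1 _ _ _ _ esym eirr hbip k bound n M hM (erefl _) p q pZ epq); apply/negP.
have ZU : forall z, inZ z -> z \in U.
  by move=> z [n zZ]; exact: (subsetP (Zs_U esym eirr hbip n hM) z zZ).
have Zstep : forall x y z, inZ x -> e x y -> [set y; z] \in M -> inZ z.
  by move=> x y z [n xZ] exy hyz; exists n.+1; apply: (Zs_step xZ exy hyz).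
have Z0 : forall z, z \in U -> z \notin cover M -> inZ z.
  by move=> z zU nz; exists 0; rewrite /= inE zU nz.
have [p [q [Yp nYq epq]]] : exists p q, [/\ inZ p \/ NZ p, ~ (inZ q \/ NZ q) & e p q].
  apply: (@crossing _ e (fun z => inZ z \/ NZ z) u w) (hconn u w).
    by left; apply: Z0 => //; apply/negP.
  case=> [/ZU wU|/p1 cw]; first by apply: (UWF hbip wU wW).
  by move/negP: nw.
have nZq : ~ inZ q by move=> h; apply: nYq; left.
have nNq : ~ NZ q by move=> h; apply: nYq; right.
case: Yp => [Zp|Np]; first by apply: nNq; exists p.
have [p' [Zp' ep'p]] := Np.
have pW := eU hbip ep'p (ZU _ Zp').
have qU := eW hbip epq pW.
have cp := p1 _ Np.
have [a' [hB1 epa']] := cover_partner esym sEE hM cp.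
have Za' : inZ a' := Zstep _ _ _ Zp' ep'p hB1.
have cq : q \in cover M by apply: NNPP => h; apply: nZq; apply: Z0 => //; apply/negP.
have [c [hB2 eqc]] := cover_partner esym sEE hM cq.
have cW := eU hbip eqc qU.
have nNc : ~ NZ c.
  move=> [p'' [Zp'' ep''c]]; apply: nZq; apply: (Zstep _ _ _ Zp'' ep''c).
  by rewrite setUC.
have a'U := ZU _ Za'.
have qa' : q != a' by apply/eqP => h; apply: nZq; rewrite h.
have B12 : [set p; a'] != [set q; c].
  apply/eqP => h; have : q \in [set p; a'] by rewrite h set21.
  case/set2P => h'; first by apply: (UWF hbip qU); rewrite h'.
  by move/eqP: qa'.
have [hD1 [cD1 kD1]] := del_matching hM hB1.
have hB2' : [set q; c] \in M :\ [set p; a'] by rewrite !inE eq_sym B12 hB2.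
have [hD2 [cD2 kD2]] := del_matching hD1 hB2'.
set M2 := (M :\ _) :\ _ in hD2 cD2 kD2.
have np2 : p \notin cover M2 by rewrite cD2 cD1 !inE eqxx /= andbF.
have nq2 : q \notin cover M2 by rewrite cD2 !inE eqxx.
have [hS cS] := add_edge hD2 (ltac:(rewrite edges2 //) : [set p; q] \in E) np2 nq2.
set MS := [set p; q] |: M2 in hS cS.
have inMS : forall v, v \in cover M -> v != a' -> v != c -> v \in cover MS.
  move=> v cv va vc; apply/coverU1P.
  case: (eqVneq v p) => [->|vp]; first by left; rewrite set21.
  case: (eqVneq v q) => [->|vq]; first by left; rewrite set22.
  by right; rewrite cD2 cD1 !inE !negb_or (negbTE vp) (negbTE va) (negbTE vq) (negbTE vc) cv.
have H : forall s t, e s t -> s \in cover M -> s \notin cover MS -> t \notin cover MS -> False.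
  move=> s t est cs ns nt.
  have sac : s = a' \/ s = c.
    apply: NNPP => /not_or_and [h1 h2].
    by move/negP: ns; apply; apply: inMS => //; apply/eqP.
  have tcov : t \in cover M -> t = a' \/ t = c.
    move=> ct; apply: NNPP => /not_or_and [h1 h2].
    by move/negP: nt; apply; apply: inMS => //; apply/eqP.
  case: sac => ?; subst s.
    have Nt : NZ t by exists a'.
    case: (tcov (p1 _ Nt)) => ?; subst t; first by rewrite eirr in est.
    by apply: nNc.
  have tU := eW hbip est cW.
  case: (boolP (t \in cover M)) => [ct|nct].
    case: (tcov ct) => ?; subst t; last by rewrite eirr in est.
    by apply: nNc; exists a'; split => //; rewrite esym.
  by apply: nNc; exists t; split; [apply: Z0|rewrite esym].
have hmaxS : maximal_matching E MS.
  apply/(max_char MS sEE); split => // s t; rewrite edges2 // => est.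
  have := ((max_char M sEE).1 hmax).2 s t; rewrite edges2 // => /(_ est) hst.
  apply: NNPP => /not_or_and [h1 h2].
  case: hst => h.
    by apply: (H s t est h); apply/negP.
  by apply: (H t s); rewrite 1?esym //; apply/negP.
have := hEq _ _ hmaxS hmax.
rewrite cS kD2 kD1.
have c1 := cardsD1 [set p; a'] M; rewrite hB1 in c1.
have c2 := cardsD1 [set q; c] (M :\ [set p; a']); rewrite hB2' in c2.
rewrite c1 c2 /=.
by rewrite add0n !add1n => -[] /n_Sn.
Qed.

End Main.

Section Main2.
Variables (T : finType) (e : rel T) (U W : {set T}).
Hypothesis esym : symmetric e.
Hypothesis eirr : irreflexive e.
Hypothesis hconn : connected_graph e.
Hypothesis hbip : bipartition e U W.
Hypothesis hlt : #|U| < #|W|.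
Local Notation E := (edges e).

Lemma allsat_equi (E' : {set {set T}}) : E' \subset E ->
  (forall M, maximal_matching E' M -> U \subset cover M) -> equimatchable E'.
Proof.
move=> sE h M1 M2 h1 h2.
by rewrite (sat_card hbip sE h1.1 (h _ h1)) (sat_card hbip sE h2.1 (h _ h2)).
Qed.

Lemma max_in_E (M : {set {set T}}) f : f \in E -> maximal_matching (del_edge E f) M ->
  (exists2 v, v \in f & v \in cover M) -> maximal_matching E M.
Proof.
move=> fE hmax [v vf cv].
have sD := del_edge_sub e f.
have [hM hc] := (max_char M sD).1 hmax.
apply/(max_char M (subxx _)); split.
  by split; [exact: subset_trans hM.1 sD|exact: hM.2].
move=> s t hst.
case: (eqVneq [set s; t] f) => [eqf|nf].
  by move: vf; rewrite -eqf => /set2P [] <-; [left|right].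
by apply: hc; rewrite /del_edge !inE nf hst.
Qed.

Lemma ii_to_i : (forall u, u \in U -> square_strong E u) -> edge_stable E.
Proof.
move=> hsq.
have hstr : forall M, maximal_matching E M -> U \subset cover M.
  by move=> M hmax; apply/subsetP => u uU; apply: (hsq u uU).1.
split; first exact: allsat_equi (subxx _) hstr.
move=> f fE.
apply: allsat_equi; first exact: del_edge_sub.
move=> M hmax.
have [u [w [uU wW ef]]] : exists u w, [/\ u \in U, w \in W & f = [set u; w]].
  have [p [q [epq ->]]] := (edgesP _ _ fE).
  case: (inUW hbip p) => [pU|pW].
    by exists p, q; split => //; apply: (eU hbip epq pU).
  by exists q, p; split; [apply: (eW hbip epq pW)|by []|rewrite setUC].
case: (classic (exists2 v, v \in f & v \in cover M)) => [hv|nv].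
  exact: hstr (max_in_E fE hmax hv).
exfalso.
have nu : u \notin cover M by apply/negP => h; apply: nv; exists u; rewrite // ef set21.
have nw : w \notin cover M by apply/negP => h; apply: nv; exists w; rewrite // ef set22.
have sD := del_edge_sub e f.
have [hM hc] := (max_char M sD).1 hmax.
have hmaxw : maximal_matching (del_vertex E w) M.
  apply/(max_char M (del_vertex_sub e w)); split.
    split; last exact: hM.2.
    apply/subsetP => B hB; rewrite inE (subsetP sD _ (subsetP hM.1 _ hB)) /=.
    by apply/negP => wB; move/negP: nw; apply; apply/coverP; exists B.
  move=> s t; rewrite inE => /andP [hst nws]; apply: hc.
  rewrite /del_edge !inE hst andbT; apply/eqP => h; move/negP: nws; apply.
  by rewrite h ef set22.
have wN : w \in nbhd E u by rewrite mem_nbhd -ef.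
have := (hsq u uU).2 w wN M hmaxw.
by move/negP: nu.
Qed.

Lemma i_to_ii_del : edge_stable E -> forall u w, u \in U -> w \in nbhd E u ->
  strong (del_vertex E w) u.
Proof.
move=> [hEq hEqD] u w uU wN M hmax; apply: NNPP => nu.
have hstr := lpp esym eirr hconn hbip hlt hEq.
pose f := [set u; w].
have fE : f \in E by rewrite /f -mem_nbhd.
have euw : e u w by rewrite -(edges2 esym eirr).
have wW := eU hbip euw uU.
have sDv := del_vertex_sub e w.
have sD := del_edge_sub e f.
have [hM hc] := (max_char M sDv).1 hmax.
have hMD : is_matching (del_edge E f) M.
  split; last exact: hM.2.
  apply/subsetP => B hB; have := subsetP hM.1 _ hB; rewrite inE => /andP [BE nwB].
  rewrite /del_edge !inE BE andbT; apply/eqP => h; move/negP: nwB; apply.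
  by rewrite h set22.
have [M' [hmax' sub]] := extend_max hMD.
have nu' : u \notin cover M'.
  apply/negP => cu.
  have [q [huq euq]] := cover_partner esym sD hmax'.1 cu.
  have huqD := subsetP hmax'.1.1 _ huq.
  have qw : q != w.
    apply/eqP => h; move: huqD; rewrite /del_edge !inE /f h eqxx.
    by [].
  have : [set u; q] \in del_vertex E w.
    rewrite inE (subsetP sD _ huqD) /= !inE negb_or; apply/andP; split; apply/eqP => h.
      by apply: (UWF hbip uU); rewrite -h.
    by move/eqP: qw; rewrite h.
  move/(hc u q) => [cuM|cq]; first by apply: nu.
  move/coverP: cq => [B hB qB].
  have eqB := triv_eq hmax'.1.2 (subsetP sub _ hB) huq qB (set22 _ _).
  by apply: nu; apply/coverP; exists B; rewrite // eqB set21.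
have lt := unsat_card hbip sD hmax'.1 uU nu'.
have [g [gE gf gshare]] : exists g, [/\ g \in E, g != f & exists2 v, v \in g & v \in f].
  apply: NNPP => hno.
  have onlyuw : forall z, z = u \/ z = w.
    move=> z; apply: NNPP => nz.
    have [p [q [Yp nYq epq]]] :=
      @crossing _ e (fun z => z = u \/ z = w) u z (or_introl erefl) nz (hconn u z).
    apply: hno; case: Yp => ?; subst p.
    - exists [set u; q]; split; first by rewrite (edges2 esym eirr).
        apply/eqP => h; apply: nYq; have : q \in f by rewrite -h set22.
        by case/set2P; [left|right].
      by exists u; rewrite /f set21.
    - exists [set w; q]; split; first by rewrite (edges2 esym eirr).
        apply/eqP => h; apply: nYq; have : q \in f by rewrite -h set22.
        by case/set2P; [left|right].
      by exists w; rewrite /f ?set21 ?set22.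
  have sW : W \subset [set w].
    apply/subsetP => z zW; rewrite inE; case: (onlyuw z) => h; rewrite h in zW *.
      by case: (UWF hbip uU zW).
    by rewrite eqxx.
  have hW := subset_leq_card sW; rewrite cards1 in hW.
  have h0 : 0 < #|U| by apply/card_gt0P; exists u.
  have := leq_trans hlt hW; rewrite ltnS leqn0 => /eqP h.
  by rewrite h in h0.
have hg : is_matching E [set g] by split; [rewrite sub1set | exact: trivIset1].
have [N [hmaxN subN]] := extend_max hg.
have gN : g \in N by rewrite (subsetP subN) ?set11.
have fN : f \notin N.
  apply/negP => fN; have [v vg vf] := gshare.
  have h := triv_eq hmaxN.1.2 gN fN vg vf.
  by rewrite h eqxx in gf.
have hmaxND : maximal_matching (del_edge E f) N.
  apply/(max_char N sD); split.
    split; last exact: hmaxN.1.2.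
    apply/subsetP => B hB; rewrite /del_edge !inE (subsetP hmaxN.1.1 _ hB) andbT.
    by apply/eqP => h; rewrite -h hB in fN.
  move=> s t; rewrite /del_edge !inE => /andP [_ hst].
  exact: ((max_char N (subxx _)).1 hmaxN).2 s t hst.
have hN : #|N| = #|U|.
  apply: (sat_card hbip (subxx _) hmaxN.1).
  by apply/subsetP => z zU; exact: hstr z zU N hmaxN.
have := hEqD f fE _ _ hmaxND hmax'.
by rewrite hN => h; rewrite h ltnn in lt.
Qed.

End Main2.
Unset Implicit Arguments.

Theorem proposition5p3 (T : finType) (e : rel T) (U W : {set T}) :
  symmetric e -> irreflexive e ->
  connected_graph e -> bipartition e U W -> #|U| < #|W| ->
  (edge_stable (edges e) <-> (forall u, u \in U -> square_strong (edges e) u)) /\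
  ((forall u, u \in U -> square_strong (edges e) u) <->
   (forall u, u \in U -> exists S : {set T},
      [/\ S != set0, S \subset nbhd (edges e) u &
          #|nbhd_set (edges e) S| <= #|S| - 1])).
Proof.
move=> esym eirr hconn hbip hlt.
split; last first.
  split => h u uU.
    exact: (sq_iff esym eirr hbip uU).1 (h u uU).
  exact: (sq_iff esym eirr hbip uU).2 (h u uU).
split; last exact: ii_to_i hbip.
move=> hst u uU; split.
  by move=> M hM; exact: (lpp esym eirr hconn hbip hlt hst.1 uU hM).
by move=> w wN M hM; exact: (i_to_ii_del esym eirr hconn hbip hlt hst uU wN hM).
Qed.
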